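(* Let $\mathcal{B}$ be a smooth real Banach space with dual $\mathcal{B}^*$, let $\nu_j\in\mathcal{B}^*$, $j\in\mathbb{N}_m$, be linearly independent and let $\mathbf{y}\in\mathbb{R}^m$. Then $\hat f\in\mathcal{B}$ is a solution of the minimum norm interpolation problem with data $\mathbf{y}$ if and only if $\hat f\in\mathcal{M}_{\mathbf{y}}$ and there exist $c_j\in\mathbb{R}$, $j\in\mathbb{N}_m$, such that $\mathcal{G}(\hat f)=\sum_{j\in\mathbb{N}_m}c_j\nu_j$.
   Context: $\mathcal{B}$ is a real Banach space with dual $\mathcal{B}^*$ and pairing $\langle\nu,f\rangle_{\mathcal{B}}:=\nu(f)$; $\mathbb{N}_m:=\{1,\dots,m\}$; $\mathcal{L}(f):=[\langle\nu_j,f\rangle_{\mathcal{B}}:j\in\mathbb{N}_m]$, $\mathcal{M}_{\mathbf{y}}:=\{f\in\mathcal{B}:\mathcal{L}(f)=\mathbf{y}\}$; a solution of the minimum norm interpolation problem with data $\mathbf{y}$ is an $\hat f\in\mathcal{M}_{\mathbf{y}}$ with $\|\hat f\|_{\mathcal{B}}=\inf\{\|f\|_{\mathcal{B}}:f\in\mathcal{M}_{\mathbf{y}}\}$. The norm is Gâteaux differentiable at $f\neq0$ if for all $h\in\mathcal{B}$ the limit $\lim_{t\to0}(\|f+th\|_{\mathcal{B}}-\|f\|_{\mathcal{B}})/t$ exists; then $\mathcal{G}(f)\in\mathcal{B}^*$ denotes the functional with $\langle\mathcal{G}(f),h\rangle_{\mathcal{B}}$ equal to this limit (the Gâteaux derivative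 of the norm at $f$). By convention $\mathcal{G}(0):=0$. $\mathcal{B}$ is smooth if its norm is Gâteaux differentiable at every nonzero $f$. *)

(* Defs.v *)
From HB Require Import structures.
From mathcomp Require Import all_boot all_order all_algebra.
From mathcomp Require Import all_classical all_reals all_analysis.
Set Implicit Arguments. Unset Strict Implicit. Unset Printing Implicit Defensive.
Import Order.TTheory GRing.Theory Num.Theory.
Import numFieldNormedType.Exports.
Local Open Scope classical_set_scope.
Local Open Scope ring_scope.

Definition norm_dq {R : realType} {B : normedModType R} (f h : B) (t : R) : R :=
  (`|f + t *: h| - `|f|) / t.

Definition gateaux_diff_at {R : realType} {B : normedModType R} (f : B) : Prop :=
  forall h : B, cvg (norm_dq f h @ 0^').

Definition smooth_space (R : realType) (B : normedModType R) : Prop :=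
  forall f : B, f != 0 -> gateaux_diff_at f.

(* Gateaux derivative G(f) of the norm, as a functional B -> R;
   convention G(0) = 0. *)
Definition gateaux_G {R : realType} {B : normedModType R} (f : B) : B -> R :=
  fun h => if f == 0 then 0 else lim (norm_dq f h @ 0^').

Definition is_dual_elt {R : realType} {B : normedModType R} (nu : B -> R) : Prop :=
  (forall (a : R) (x y : B), nu (a *: x + y) = a * nu x + nu y) /\ continuous nu.

Definition lin_indep_fun {R : realType} {B : normedModType R} (m : nat)
  (nu : 'I_m -> B -> R) : Prop :=
  forall c : 'I_m -> R, (forall f : B, \sum_(j < m) c j * nu j f = 0) ->
    forall j, c j = 0.

Definition M_y {R : realType} {B : normedModType R} (m : nat)
  (nu : 'I_m -> B -> R) (y : 'I_m -> R) : set B :=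
  [set f | forall j, nu j f = y j].

Definition mni_solution {R : realType} {B : normedModType R} (m : nat)
  (nu : 'I_m -> B -> R) (y : 'I_m -> R) (fhat : B) : Prop :=
  M_y nu y fhat /\ `|fhat| = inf [set `|f| | f in M_y nu y].

(* Main.v *)
Require Import Defs.
From HB Require Import structures.
From mathcomp Require Import all_boot all_order all_algebra.
From mathcomp Require Import all_classical all_reals all_analysis.
From mathcomp Require Import lra.
Import Order.TTheory GRing.Theory Num.Theory.
Import numFieldNormedType.Exports.
Local Open Scope classical_set_scope.
Local Open Scope ring_scope.

Lemma real1 (R : realType) (a b c s u : R) : 0 < s -> 0 < u ->
  (s + u) * a <= s * b + u * c -> (b - a) / (- u) <= (c - a) / s.
Proof.
move=> s0 u0 H.
rewrite invrN mulrN -mulNr opprB ler_pdivlMr // mulrAC ler_pdivrMr //.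
nra.
Qed.

Section Cl.
Variables (R : realType) (g : R -> R) (l : R).
Hypothesis hg : g @ 0^' --> l.

Lemma right_of : g @ 0^'+ --> l.
Proof.
apply: cvg_trans hg; apply: cvg_app; apply: within_subset => x /= x0.
by rewrite gt_eqF.
Qed.
Lemma left_of : g @ 0^'- --> l.
Proof.
apply: cvg_trans hg; apply: cvg_app; apply: within_subset => x /= x0.
by rewrite lt_eqF.
Qed.

Lemma clR_ge c : (forall t, 0 < t -> c <= g t) -> c <= l.
Proof.
move=> H; apply: (cvgr_to_ge right_of).
near=> t; apply: H; near: t; exact: nbhs_right_gt.
Unshelve. all: by end_near.
Qed.
Lemma clR_le c : (forall t, 0 < t -> g t <= c) -> l <= c.
Proof.
move=> H; apply: (cvgr_to_le right_of).
near=> t; apply: H; near: t; exact: nbhs_right_gt.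
Unshelve. all: by end_near.
Qed.
Lemma clL_ge c : (forall t, t < 0 -> c <= g t) -> c <= l.
Proof.
move=> H; apply: (cvgr_to_ge left_of).
near=> t; apply: H; near: t; exact: nbhs_left_lt.
Unshelve. all: by end_near.
Qed.
Lemma clL_le c : (forall t, t < 0 -> g t <= c) -> l <= c.
Proof.
move=> H; apply: (cvgr_to_le left_of).
near=> t; apply: H; near: t; exact: nbhs_left_lt.
Unshelve. all: by end_near.
Qed.
End Cl.

Section Cvx.
Variables (R : realType) (B : normedModType R) (f : B).

Lemma mixed h s u : 0 < s -> 0 < u -> norm_dq f h (- u) <= norm_dq f h s.
Proof.
move=> s0 u0; rewrite /norm_dq; apply: real1 => //.
have -> : (s + u) * `|f| = `|(s + u) *: f|.
  by rewrite normrZ ger0_norm // addr_ge0 // ltW.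
have -> : (s + u) *: f = s *: (f + - u *: h) + u *: (f + s *: h).
  by rewrite !scalerDr !scalerA mulrN scaleNr (mulrC u s) scalerDl addrACA addNr addr0.
apply: le_trans (ler_normD _ _) _.
by rewrite !normrZ !ger0_norm // ltW.
Qed.

Hypothesis Hc : forall h, cvg (norm_dq f h @ 0^').
Let D h := lim (norm_dq f h @ 0^').
Let HD h : norm_dq f h @ 0^' --> D h := Hc h.

Lemma D_ub h s : 0 < s -> D h <= norm_dq f h s.
Proof.
move=> s0; apply: (@clL_le _ _ _ (HD h)) => t t0.
by rewrite -(opprK t); apply: mixed => //; rewrite oppr_gt0.
Qed.

Lemma D_lb h u : u < 0 -> norm_dq f h u <= D h.
Proof.
move=> u0; apply: (@clR_ge _ _ _ (HD h)) => t t0.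
by rewrite -(opprK u); apply: mixed => //; rewrite oppr_gt0.
Qed.

Lemma dq_neg h t : norm_dq f (- h) t = - norm_dq f h (- t).
Proof. by rewrite /norm_dq scalerN -scaleNr invrN mulrN opprK. Qed.

Lemma D_neg h : D (- h) = - D h.
Proof.
apply/eqP; rewrite eq_le; apply/andP; split.
- rewrite lerNr; apply: (@clL_le _ _ _ (HD h)) => t t0.
  rewrite lerNr -(opprK t) -dq_neg; apply: D_ub; by rewrite oppr_gt0.
- rewrite lerNl; apply: (@clR_ge _ _ _ (HD h)) => t t0.
  rewrite lerNl -(opprK t) -dq_neg; apply: D_lb; by rewrite oppr_lt0.
Qed.

Lemma dq_scale a h t : a != 0 -> norm_dq f (a *: h) t = a * norm_dq f h (a * t).
Proof.
move=> a0; rewrite /norm_dq scalerA (mulrC t a) invfM.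
by rewrite mulrCA (mulrA a) mulfV // mul1r.
Qed.

Lemma D_zero : D 0 = 0.
Proof.
have E t : norm_dq f 0 t = 0 by rewrite /norm_dq scaler0 addr0 subrr mul0r.
apply/eqP; rewrite eq_le; apply/andP; split.
- by apply: (@clR_le _ _ _ (HD 0)) => t _; rewrite E.
- by apply: (@clR_ge _ _ _ (HD 0)) => t _; rewrite E.
Qed.

Lemma D_scale_pos a h : 0 < a -> D (a *: h) = a * D h.
Proof.
move=> a0; apply/eqP; rewrite eq_le; apply/andP; split.
- apply: (@clL_le _ _ _ (HD _)) => t t0; rewrite dq_scale ?gt_eqF //.
  rewrite ler_pM2l //; apply: D_lb; by rewrite pmulr_rlt0.
- apply: (@clR_ge _ _ _ (HD _)) => t t0; rewrite dq_scale ?gt_eqF //.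
  rewrite ler_pM2l //; apply: D_ub; by rewrite mulr_gt0.
Qed.

Lemma D_scale a h : D (a *: h) = a * D h.
Proof.
case: (ltgtP a 0) => [a0|a0|->].
- rewrite -(opprK a) scaleNr D_neg D_scale_pos ?oppr_gt0 //.
  by rewrite !mulNr opprK.
- exact: D_scale_pos.
- by rewrite scale0r mul0r D_zero.
Qed.

Lemma dq_add x y t : 0 < t -> norm_dq f (x + y) t <= norm_dq f x (2 * t) + norm_dq f y (2 * t).
Proof.
move=> t0; rewrite /norm_dq invfM !mulrA -mulrDl ler_pM2r ?invr_gt0 //.
have H : 2 * `|f + t *: (x + y)| <= `|f + (2 * t) *: x| + `|f + (2 * t) *: y|.
  have -> : 2 * `|f + t *: (x + y)| = `|2 *: (f + t *: (x + y))|.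
    by rewrite normrZ ger0_norm.
  have -> : 2 *: (f + t *: (x + y)) = (f + (2 * t) *: x) + (f + (2 * t) *: y).
    rewrite -!scalerA scalerDr scalerDr scalerDl scale1r.
    rewrite -[2]/(1 + 1) !scalerDl !scale1r. 
    by rewrite (addrACA (t *: x)) (addrACA f).
  exact: ler_normD.
lra.
Qed.

Lemma D_add x y : D (x + y) = D x + D y.
Proof.
have sub a b : D (a + b) <= D a + D b.
  have Hs : (fun t => norm_dq f a t + norm_dq f b t) @ 0^' --> D a + D b.
    exact: cvgD.
  apply: (@clR_ge _ _ _ Hs) => s s0 /=.
  have s2 : 0 < s / 2 by rewrite divr_gt0.
  apply: le_trans (D_ub _ _ s2) _.
  apply: le_trans (dq_add _ _ _ s2) _.
  by rewrite mulrC -mulrA mulVf // mulr1.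
apply/eqP; rewrite eq_le sub /=.
have := sub (x + y) (- y); rewrite addrK D_neg.
by rewrite lerBrDr.
Qed.

Lemma D_lin a x y : D (a *: x + y) = a * D x + D y.
Proof. by rewrite D_add D_scale. Qed.

End Cvx.
Definition linf {R : realType} {B : lmodType R} (g : B -> R) :=
  forall a x y, g (a *: x + y) = a * g x + g y.

Section LinA.
Variables (R : realType) (B : lmodType R).

Lemma linf0 (g : B -> R) : linf g -> g 0 = 0.
Proof.
move=> Hg; have := Hg 1 0 0; rewrite scale1r addr0 mul1r; lra.
Qed.

Lemma linfD (g : B -> R) x y : linf g -> g (x + y) = g x + g y.
Proof. by move=> Hg; rewrite -[x]scale1r Hg mul1r scale1r. Qed.

Lemma linfZ (g : B -> R) a x : linf g -> g (a *: x) = a * g x.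
Proof. by move=> Hg; rewrite -[a *: x]addr0 Hg linf0 // addr0. Qed.

Lemma comb m : forall (nu : 'I_m -> B -> R) (G : B -> R),
  (forall j, linf (nu j)) -> linf G ->
  (forall h, (forall j, nu j h = 0) -> G h = 0) ->
  exists c : 'I_m -> R, forall h, G h = \sum_(j < m) c j * nu j h.
Proof.
elim: m => [|m IH] nu G Hnu HG HK.
  exists (fun _ => 0) => h; rewrite big_ord0; apply: HK; by case.
pose nu' (i : 'I_m) := nu (lift ord_max i).
have Hnu' i : linf (nu' i) by apply: Hnu.
have Ew (i : 'I_m) : widen_ord (leqnSn m) i = lift ord_max i.
  by apply: val_inj; rewrite /= /bump leqNgt ltn_ord.
have Hsum (c' : 'I_m -> R) (k : R) h :
    \sum_(j < m.+1) (if unlift ord_max j is Some i then c' i else k) * nu j h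
    = \sum_(i < m) c' i * nu' i h + k * nu ord_max h.
  rewrite big_ord_recr /= unlift_none; congr (_ + _).
  by apply: eq_bigr => i _; rewrite Ew liftK.
have allj (P : 'I_m.+1 -> Prop) : (forall i, P (lift ord_max i)) -> P ord_max -> forall j, P j.
  by move=> H1 H2 j; case: (unliftP ord_max j) => [i ->|->].
case: (pselect (exists g, (forall i, nu' i g = 0) /\ nu ord_max g != 0)).
- move=> [g [Hg0 Hgn]].
  pose g1 := (nu ord_max g)^-1 *: g.
  have g1m : nu ord_max g1 = 1 by rewrite /g1 linfZ // mulVf.
  have g1i i : nu' i g1 = 0 by rewrite /g1 linfZ // Hg0 mulr0.
  pose G' h := G h - G g1 * nu ord_max h.
  have HG' : linf G'.
    move=> a x y; rewrite /G' HG Hnu; lra.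
  have HK' h : (forall i, nu' i h = 0) -> G' h = 0.
    move=> Hh.
    have Z : G ((- nu ord_max h) *: g1 + h) = 0.
      apply: HK; apply: allj.
      + by move=> i; rewrite Hnu; have := g1i i; have := Hh i; rewrite /nu' => -> ->; rewrite mulr0 addr0.
      + by rewrite Hnu g1m mulr1 addNr.
    by move: Z; rewrite HG /G'; lra.
  have [c' Hc'] := IH nu' G' Hnu' HG' HK'.
  exists (fun j => if unlift ord_max j is Some i then c' i else G g1) => h.
  rewrite Hsum -Hc' /G'; lra.
- move=> Hn.
  have HK' h : (forall i, nu' i h = 0) -> G h = 0.
    move=> Hh; apply: HK; apply: allj; first exact: Hh.
    case: (eqVneq (nu ord_max h) 0) => // Hne; exfalso; apply: Hn; exists h; by split.
  have [c' Hc'] := IH nu' G Hnu' HG HK'.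
  exists (fun j => if unlift ord_max j is Some i then c' i else 0) => h.
  by rewrite Hsum mul0r addr0 -Hc'.
Qed.
End LinA.

Theorem mainTheorem3 (R : realType) (B : completeNormedModType R)
  (m : nat) (nu : 'I_m -> B -> R) (y : 'I_m -> R) (fhat : B) :
  smooth_space B ->
  (forall j, is_dual_elt (nu j)) ->
  lin_indep_fun nu ->
  mni_solution nu y fhat <->
  (M_y nu y fhat /\
   exists c : 'I_m -> R, forall h : B, gateaux_G fhat h = \sum_(j < m) c j * nu j h).
Proof.
move=> Hsm Hnu _.
have Hlin j : linf (nu j) by move=> a x z; exact: (Hnu j).1.
have Slb : has_lbound [set `|f| | f in M_y nu y].
  by exists 0 => _ [f _ <-]; exact: normr_ge0.
split.
- move=> [HM Hinf]; split => //.
  case: (eqVneq fhat 0) => [->|fne].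
    exists (fun _ => 0) => h; rewrite /gateaux_G eqxx big1 // => j _.
    by rewrite mul0r.
  have Hc := Hsm fhat fne.
  apply: comb => //.
    by move=> a x z; rewrite /gateaux_G (negbTE fne); exact: D_lin.
  move=> h Hh; rewrite /gateaux_G (negbTE fne).
  have Hge t : `|fhat| <= `|fhat + t *: h|.
    rewrite Hinf; apply: ge_inf => //; exists (fhat + t *: h) => //.
    by move=> j; rewrite linfD // linfZ // Hh mulr0 addr0 HM.
  apply/eqP; rewrite eq_le; apply/andP; split.
  + apply: (@clL_le _ _ _ (Hc h)) => t t0; rewrite /norm_dq.
    by apply: mulr_ge0_le0; rewrite ?subr_ge0 ?Hge // invr_le0 ltW.
  + apply: (@clR_ge _ _ _ (Hc h)) => t t0; rewrite /norm_dq.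
    by apply: divr_ge0; rewrite ?subr_ge0 ?Hge // ltW.
- move=> [HM [c Hcomb]]; split => //.
  apply/eqP; rewrite eq_le; apply/andP; split; last first.
    by apply: ge_inf => //; exists fhat.
  apply: lb_le_inf; first by exists `|fhat|, fhat.
  move=> _ [f Hf <-].
  case: (eqVneq fhat 0) => [->|fne]; first by rewrite normr0 normr_ge0.
  have Hc := Hsm fhat fne.
  have H0 : gateaux_G fhat (f - fhat) = 0.
    rewrite Hcomb big1 // => j _.
    have -> : nu j (f - fhat) = 0.
      by rewrite addrC -scaleN1r Hlin Hf HM; lra.
    by rewrite mulr0.
  have := @D_ub _ _ fhat Hc (f - fhat) 1 ltr01.
  rewrite /gateaux_G (negbTE fne) in H0; rewrite H0 /norm_dq scale1r invr1 mulr1.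
  rewrite addrCA subrr addr0 subr_ge0. done.

Qed.
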